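(* Let $\mathrm{opt}$ be the cost of an optimal solution and $\mathrm{opt}_{LP}$ the optimum value of the linear program LP-CVRP-MD described in the context, and let $(x,z)$ be an optimal solution of that LP. Define $\delta$ by $\sum_{r \in R}\sum_{v \in C} 2\,c(v,r)\, z^r_{v,v} = (1-\delta)\,\mathrm{opt}_{LP}$. Then $\mathrm{opt}_{LP} \le \mathrm{opt}$ and $\mathrm{lb} \le (1-\delta)\,\mathrm{opt}_{LP}$, where $\mathrm{lb} = \frac{2}{k}\sum_{v \in C} c(v,R)$.
   Context: Problem (Capacitated Vehicle Routing with Multiple Depots): nonempty disjoint finite sets $C$ (clients) and $R$ (depots), $V = C \cup R$, a metric $c$ on $V$, and an integer capacity $k \ge 1$. A feasible solution is a collection of tours, each starting and ending at a depot and visiting at most $k$ clients, such that every client is on some tour; its cost is the total edge cost; $\mathrm{opt}$ is the minimum cost. It is assumed that $c(v,R) := \min_{r \in R} c(v,r) > 0$ for every client $v$. Consider the complete bidirected graph on $V$ (each unordered pair $\{a,b\}$ gives directed edges $(a,b)$ and $(b,a)$, each of cost $c(a,b)$). For a vector $y$ on directed edges and $S \subseteq V$, $y(\delta^{in}(S))$ and $y(\delta^{out}(S))$ denote the sums of $y$ over directed edges entering, resp. leaving, $S$ (for a single vertex $u$ write $\delta^{in}(u)$, $\delta^{out}(u)$). LP-CVRP-MD has variables $x^r_{v,e} \ge 0$ for $r \in R$, $v \in C$, directed edges $e$, and $z^r_{v,u} \ge 0$ for $r \in R$, $v \in C$, $u \in V$; write $x^r_v$ for the vector $(x^r_{v,e})_e$.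 It minimizes $\sum_{r \in R}\sum_{v \in C}\sum_e c(e)\, x^r_{v,e}$ subject to: (1) for all $r \in R$, $v \in C$, $u \in V$: $x^r_v(\delta^{out}(u))$ equals $2 z^r_{v,v}$ if $u = r$, equals $0$ if $u = v$, and equals $z^r_{v,u}$ otherwise; (2) for all $r \in R$, $v \in C$, $u \in V$: $x^r_v(\delta^{in}(u))$ equals $0$ if $u = r$, equals $2 z^r_{v,v}$ if $u = v$, and equals $z^r_{v,u}$ otherwise; (3) $x^r_v(\delta^{in}(S)) \ge z^r_{v,u}$ for all $r \in R$, $v \in C$, $u \in V$ and all $S$ with $u \in S \subseteq V \setminus \{r\}$; (4) $\sum_{r \in R}\sum_{v \in C} z^r_{v,u} = 1$ for every client $u \in C$; (5) $z^r_{v,u} \le z^r_{v,v}$ for all $r \in R$, $u,v \in C$; (6) $z^r_{v,u} = 0$ for all $r \in R$, $u,v \in C$ with $c(u,r) > c(v,r)$; (7) $\sum_{u \in C} z^r_{v,u} \le k\, z^r_{v,v}$ for all $r \in R$, $v \in C$. Its optimum value is $\mathrm{opt}_{LP}$. *)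

(* Defs.v *)
From HB Require Import structures.
From mathcomp Require Import all_boot all_order all_algebra.
Set Implicit Arguments. Unset Strict Implicit. Unset Printing Implicit Defensive.
Import Order.TTheory GRing.Theory Num.Theory.
Local Open Scope ring_scope.

Section CVRPMD.
Variables (F : realFieldType) (V : finType).

Definition is_metric (c : V -> V -> F) : Prop :=
  [/\ forall a b, 0 <= c a b,
      forall a b, c a b = 0 <-> a = b,
      forall a b, c a b = c b a &
      forall a b w, c a w <= c a b + c b w].

(* c(v, D) = min_{r in D} c(v, r)  (0 if D is empty, never used then) *)
Definition distS (c : V -> V -> F) (D : {set V}) (v : V) : F :=
  if [pick r in D] is Some r0 then \big[Num.min/c v r0]_(r in D) c v r else 0.

(* A tour is a depot r and the sequence s of vertices visited in between:
   the closed walk r -> s_1 -> ... -> s_m -> r. *)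
Definition tour := (V * seq V)%type.

Definition tour_cost (c : V -> V -> F) (t : tour) : F :=
  \sum_(e <- zip (t.1 :: t.2) (rcons t.2 t.1)) c e.1 e.2.

Definition tour_clients (C : {set V}) (t : tour) : {set V} :=
  [set w in C | w \in t.2].

Definition cvrp_feasible (C D : {set V}) (k : nat) (sol : seq tour) : Prop :=
  (forall t, t \in sol -> t.1 \in D /\ (#|tour_clients C t| <= k)%N) /\
  (forall u, u \in C -> exists2 t, t \in sol & u \in t.2).

Definition sol_cost (c : V -> V -> F) (sol : seq tour) : F :=
  \sum_(t <- sol) tour_cost c t.

(* LP variables: x r v a b  is x^r_{v,(a,b)}  (directed edge (a,b), a != b),
                 z r v u    is z^r_{v,u}. *)
Definition lpx := V -> V -> V -> V -> F.
Definition lpz := V -> V -> V -> F.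

Definition xout (x : lpx) r v u : F := \sum_(w | w != u) x r v u w.
Definition xin (x : lpx) r v u : F := \sum_(w | w != u) x r v w u.
Definition xinS (x : lpx) r v (S : {set V}) : F :=
  \sum_(a in ~: S) \sum_(b in S) x r v a b.

Definition lp_cost (c : V -> V -> F) (C D : {set V}) (x : lpx) : F :=
  \sum_(r in D) \sum_(v in C) \sum_a \sum_(b | a != b) c a b * x r v a b.

Definition lp_feasible (c : V -> V -> F) (C D : {set V}) (k : nat)
    (x : lpx) (z : lpz) : Prop :=
  (      (forall r v a b, r \in D -> v \in C -> a != b -> 0 <= x r v a b) /\
      (forall r v u, r \in D -> v \in C -> 0 <= z r v u) /\
      (* (1) *)
      (forall r v u, r \in D -> v \in C ->
         xout x r v u = if u == r then 2 * z r v v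
                        else if u == v then 0 else z r v u) /\
      (* (2) *)
      (forall r v u, r \in D -> v \in C ->
         xin x r v u = if u == r then 0
                       else if u == v then 2 * z r v v else z r v u) /\
      (* (3) *)
      (forall r v u (S : {set V}), r \in D -> v \in C ->
         u \in S -> S \subset ~: [set r] -> z r v u <= xinS x r v S) /\
      (* (4) *)
      (forall u, u \in C -> \sum_(r in D) \sum_(v in C) z r v u = 1) /\
      (* (5) *)
      (forall r u v, r \in D -> u \in C -> v \in C -> z r v u <= z r v v) /\
      (* (6) *)
      (forall r u v, r \in D -> u \in C -> v \in C -> c u r > c v r ->
         z r v u = 0) /\
      (* (7) *)
      (forall r v, r \in D -> v \in C ->
         \sum_(u in C) z r v u <= k%:R * z r v v)).

Definition lp_optimal c C D k x z : Prop :=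
  lp_feasible c C D k x z /\
  forall x' z', lp_feasible c C D k x' z' -> lp_cost c C D x <= lp_cost c C D x'.

End CVRPMD.

(* Main.v *)
Require Import Defs.
From HB Require Import structures.
From mathcomp Require Import all_boot all_order all_algebra zify ring.
Set Implicit Arguments. Unset Strict Implicit. Unset Printing Implicit Defensive.
Import Order.TTheory GRing.Theory Num.Theory.
Local Open Scope ring_scope.

Section Paths.
Variables (F : realFieldType) (V : finType) (c : V -> V -> F).
Hypothesis c0 : forall a, c a a = 0.
Hypothesis csym : forall a b, c a b = c b a.
Hypothesis ctri : forall a b w, c a w <= c a b + c b w.

Fixpoint edges (p : seq V) : seq (V * V) :=
  match p with
  | x :: q => if q is y :: _ then (x, y) :: edges q else [::]
  | [::] => [::]
  end.

Definition pc p := \sum_(e <- edges p) c e.1 e.2.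

Lemma pc_cons2 x y q : pc (x :: y :: q) = c x y + pc (y :: q).
Proof. by rewrite /pc /= big_cons. Qed.

Lemma pc_cons x p : pc (x :: p) = c x (head x p) + pc p.
Proof. case: p => [|y q]; last by rewrite pc_cons2. by rewrite /pc /= big_nil c0 addr0. Qed.

Lemma pc_rcons p x : pc (rcons p x) = pc p + c (last x p) x.
Proof.
elim: p => [|y p IH]; first by rewrite /pc /= big_nil c0 addr0.
rewrite rcons_cons pc_cons IH pc_cons /=.
case: p {IH} => [|z p] /=.
  by rewrite /pc /= big_nil !c0 !addr0 add0r.
by rewrite addrA.
Qed.

Lemma last_rev' (x : V) q : last x (rev q) = head x q.
Proof. by case: q => [|y q] //; rewrite rev_cons last_rcons. Qed.

Lemma pc_rev p : pc (rev p) = pc p.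
Proof.
elim: p => [|x q IH] //.
by rewrite rev_cons pc_rcons IH last_rev' pc_cons csym addrC.
Qed.

Lemma pc_cat p x q : pc (p ++ x :: q) = pc (rcons p x) + pc (x :: q).
Proof.
elim: p => [|y p IH]; first by rewrite /= /pc /= big_nil add0r.
rewrite cat_cons rcons_cons pc_cons [pc (y :: rcons _ _)]pc_cons IH addrA; congr (_ + _ + _).
by case: p {IH}.
Qed.

Lemma zip_edges x s y : zip (x :: s) (rcons s y) = edges (x :: rcons s y).
Proof. elim: s x => [|z s IH] x //=. by rewrite IH. Qed.

Lemma tour_pc r s : tour_cost c (r, s) = pc (r :: rcons s r).
Proof. by rewrite /tour_cost /pc /= zip_edges.
Qed.

Lemma pc_subseq s s' a b : subseq s' s -> pc (a :: rcons s' b) <= pc (a :: rcons s b).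
Proof.
elim: s s' a => [|x s0 IH] s' a.
  by rewrite subseq0 => /eqP ->.
case: s' => [|y s1].
  move=> _; have := IH [::] a (sub0seq _).
  move=> H; apply: (le_trans H).
  rewrite rcons_cons.
  case E: (rcons s0 b) => [|h q]; first by case: (s0) E.
  rewrite !pc_cons2 addrA lerD2r; exact: ctri.
rewrite /= ; case: eqP => [<-|_] Hs.
  by rewrite !pc_cons2 lerD2l IH.
have := IH _ a Hs; move=> H; apply: (le_trans H).
case E: (rcons s0 b) => [|h q]; first by case: (s0) E.
rewrite !pc_cons2 addrA lerD2r; exact: ctri.
Qed.


Definition cntF (l : seq (V * V)) a b : F := (count (pred1 (a, b)) l)%:R.

Lemma sum_cnt (f : V -> V -> F) l :
  \sum_a \sum_b f a b * cntF l a b = \sum_(e <- l) f e.1 e.2.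
Proof.
elim: l => [|e l IH].
  by rewrite big_nil big1 // => a _; rewrite big1 // => b _; rewrite /cntF mulr0.
rewrite big_cons -IH /cntF.
have -> : \sum_a \sum_b f a b * (count (pred1 (a, b)) (e :: l))%:R =
   \sum_a \sum_b (f a b * (e == (a, b))%:R + f a b * (count (pred1 (a, b)) l)%:R).
  by apply: eq_bigr => a _; apply: eq_bigr => b _; rewrite /= natrD mulrDr.
rewrite (eq_bigr (fun a => \sum_b f a b * (e == (a, b))%:R +
     \sum_b f a b * (count (pred1 (a, b)) l)%:R)); last by move=> a _; rewrite big_split.
rewrite big_split /=; congr (_ + _).
rewrite (bigD1 e.1) //= [X in _ + X]big1 ?addr0; last first.
  move=> a /negPf ne; rewrite big1 // => b _.
  case: eqP => [E|]; last by rewrite mulr0.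
  by move: ne; rewrite E eqxx.
rewrite (bigD1 e.2) //= big1 ?addr0; last first.
  move=> b /negPf ne; case: eqP => [E|]; last by rewrite mulr0.
  by move: ne; rewrite E eqxx.
by case: e => a b /=; rewrite eqxx mulr1.
Qed.

Lemma sum_ind_count (P : pred (V * V)) l :
  \sum_(e <- l) (P e)%:R = (count P l)%:R :> F.
Proof.
elim: l => [|e l IH]; first by rewrite big_nil.
by rewrite big_cons IH /= natrD.
Qed.

Lemma out_cnt l u :
  \sum_(w | w != u) cntF l u w = (count (fun e => (e.1 == u) && (e.2 != u)) l)%:R.
Proof.
rewrite -sum_ind_count -(sum_cnt (fun a b => ((a == u) && (b != u))%:R)).
rewrite [RHS](bigD1 u) //= [X in _ + X]big1 ?addr0; last first.
  by move=> a /negPf ne; rewrite big1 // => b _; rewrite ne mul0r.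
rewrite big_mkcond; apply: eq_bigr => b _; rewrite eqxx /=.
by case: (b != u); rewrite ?mul1r ?mul0r.
Qed.

Lemma in_cnt l u :
  \sum_(w | w != u) cntF l w u = (count (fun e => (e.2 == u) && (e.1 != u)) l)%:R.
Proof.
rewrite -sum_ind_count -(sum_cnt (fun a b => ((b == u) && (a != u))%:R)).
rewrite big_mkcond; apply: eq_bigr => a _.
rewrite (bigD1 u) //= [X in _ + X]big1 ?addr0; last first.
  by move=> b /negPf ne; rewrite ne mul0r.
by rewrite eqxx /=; case: (a != u); rewrite ?mul1r ?mul0r.
Qed.

Lemma cut_cnt l (S : {set V}) :
  \sum_(a in ~: S) \sum_(b in S) cntF l a b =
  (count (fun e => (e.1 \notin S) && (e.2 \in S)) l)%:R.
Proof.
rewrite -sum_ind_count -(sum_cnt (fun a b => ((a \notin S) && (b \in S))%:R)).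
rewrite [LHS]big_mkcond /=; apply: eq_bigr => a _.
rewrite in_setC; case: (a \in S) => /=.
  by rewrite big1 // => b _; rewrite mul0r.
rewrite [LHS]big_mkcond /=; apply: eq_bigr => b _.
by case: (b \in S); rewrite /= ?mul1r ?mul0r.
Qed.

Lemma cost_cnt l :
  \sum_a \sum_(b | a != b) c a b * cntF l a b = \sum_(e <- l) c e.1 e.2.
Proof.
rewrite -sum_cnt; apply: eq_bigr => a _.
rewrite big_mkcond; apply: eq_bigr => b _.
case: eqP => [->|]; by rewrite ?c0 ?mul0r.
Qed.

Lemma out_deg x q u : uniq (x :: q) ->
  (count (fun e => (e.1 == u) && (e.2 != u)) (edges (x :: q)) + (u == last x q) = (u \in x :: q))%N.
Proof.
elim: q x => [|y q IH] x /=; first by rewrite in_cons in_nil orbF eq_sym.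
case/andP => nx uq; rewrite -addnA; have := IH y uq; rewrite /= => ->.
rewrite !in_cons; case: (eqVneq u x) => [E|ne] /=.
  subst u; move: nx; rewrite in_cons negb_or => /andP[nxy nxq].
  by rewrite eq_sym nxy (negPf nxy) (negPf nxq).
by [].
Qed.

Lemma in_deg x q u : uniq (x :: q) ->
  (count (fun e => (e.2 == u) && (e.1 != u)) (edges (x :: q)) + (u == x) = (u \in x :: q))%N.
Proof.
elim: q x => [|y q IH] x /=; first by rewrite in_cons in_nil orbF.
case/andP => nx uq; have := IH y uq; rewrite /= => H.
rewrite !in_cons; case: (eqVneq u x) => [E|ne] /=.
  subst u; move: nx; rewrite in_cons negb_or => /andP[nxy nxq].
  have Hc : count (fun e => (e.2 == x) && (e.1 != x)) (edges (y :: q)) = 0%N.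
    by move: H; rewrite /= in_cons (negPf nxy) (negPf nxq) addn0.
  rewrite /= in Hc; by rewrite Hc andbF.
by rewrite andbT addn0 -in_cons -H eq_sym addnC.
Qed.

Lemma cut_path x q u (S : {set V}) : x \notin S -> u \in x :: q -> u \in S ->
  (0 < count (fun e => (e.1 \notin S) && (e.2 \in S)) (edges (x :: q)))%N.
Proof.
elim: q x => [|y q IH] x /= nxS; first by rewrite in_cons in_nil orbF => /eqP -> xS; rewrite xS in nxS.
rewrite in_cons => /orP[/eqP -> uS|uin uS]; first by rewrite uS in nxS.
case yS: (y \in S); first by rewrite nxS /=.
by rewrite addnC ltn_addr // IH // yS.
Qed.

End Paths.
Section Tour.
Variables (F : realFieldType) (V : finType) (c : V -> V -> F).
Variables (C D : {set V}) (k : nat).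
Hypothesis c0 : forall a, c a a = 0.
Hypothesis csym : forall a b, c a b = c b a.
Hypothesis ctri : forall a b w, c a w <= c a b + c b w.
Hypothesis cnn : forall a b, 0 <= c a b.
Hypothesis dCD : [disjoint C & D].

Definition far r (s : seq V) := foldr (fun x y => if c y r <= c x r then x else y) r s.

Lemma far_max r s u : u \in s -> c u r <= c (far r s) r.
Proof.
elim: s => [|x s IH] //=.
case: ifP => H; rewrite in_cons => /orP[/eqP->|us] //.
- exact: (le_trans (IH us) H).
- by move/negbT: H; rewrite -ltNge => /ltW.
- exact: IH.
Qed.

Lemma far_in r s : s != [::] -> far r s \in s.
Proof.
elim: s => [|x s IH] //= _.
case: ifP => H; first exact: mem_head.
case: s IH H => [|y s] IH H /=.
  by move: H; rewrite c0 cnn.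
by rewrite in_cons IH ?orbT.
Qed.

Definition good (T : tour V) :=
  [/\ T.1 \in D, uniq T.2, all (mem C) T.2 & (size T.2 <= k)%N].

Definition pa (T : tour V) := take (index (far T.1 T.2) T.2) T.2.
Definition pb (T : tour V) := drop (index (far T.1 T.2) T.2).+1 T.2.
Definition p1 (T : tour V) := T.1 :: rcons (pa T) (far T.1 T.2).
Definition p2 (T : tour V) := T.1 :: rcons (rev (pb T)) (far T.1 T.2).

Definition guard (T : tour V) r v := [&& r == T.1, v == far T.1 T.2 & T.2 != [::]].

Definition xT (T : tour V) : lpx F V := fun r v a b =>
  if guard T r v then cntF F (edges (p1 T)) a b + cntF F (edges (p2 T)) a b else 0.
Definition zT (T : tour V) : lpz F V := fun r v u =>
  if guard T r v then (u \in T.2)%:R else 0.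

Lemma split_s (T : tour V) : T.2 != [::] -> T.2 = pa T ++ far T.1 T.2 :: pb T.
Proof.
move=> ne; have vin := far_in T.1 ne.
rewrite /pa /pb -{1}(cat_take_drop (index (far T.1 T.2) T.2) T.2).
by rewrite (drop_nth (far T.1 T.2)) ?index_mem // nth_index.
Qed.

Lemma arith_out (Ur Ua Uv Ub : bool) (o1 o2 : nat) :
  [|| Ur && Ua, Ur && Uv, Ur && Ub, Ua && Uv, Ua && Ub | Uv && Ub] = false ->
  (o1 + Uv = Ur || (Uv || Ua))%N -> (o2 + Uv = Ur || (Uv || Ub))%N ->
  (o1 + o2 = if Ur then 2 else if Uv then 0 else (Ua || Uv || Ub))%N.
Proof. by case: Ur; case: Ua; case: Uv; case: Ub => //= _; lia. Qed.

Lemma arith_in (Ur Ua Uv Ub : bool) (o1 o2 : nat) :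
  [|| Ur && Ua, Ur && Uv, Ur && Ub, Ua && Uv, Ua && Ub | Uv && Ub] = false ->
  (o1 + Ur = Ur || (Uv || Ua))%N -> (o2 + Ur = Ur || (Uv || Ub))%N ->
  (o1 + o2 = if Ur then 0 else if Uv then 2 else (Ua || Uv || Ub))%N.
Proof. by case: Ur; case: Ua; case: Uv; case: Ub => //= _; lia. Qed.

Section OneTour.
Variable T : tour V.
Hypothesis ne : T.2 != [::].
Hypothesis uq : uniq T.2.
Hypothesis rns : T.1 \notin T.2.

Let r := T.1.
Let s := T.2.
Let v := far r s.
Let a := pa T.
Let b := pb T.

Lemma sE : s = a ++ v :: b.
Proof. exact: split_s. Qed.

Lemma facts : [/\ r \notin a, r != v, r \notin b, v \notin a & v \notin b] /\ ~~ has (mem a) b.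
Proof.
have := rns; have := uq; rewrite -/s sE cat_uniq mem_cat in_cons /= => /and3P[ua].
rewrite negb_or => /andP[nva nhab] /andP[nvb ub].
rewrite !negb_or => /and3P[nra nrv nrb]; do !split => //.
Qed.

Lemma up1 : uniq (p1 T).
Proof.
have [[nra nrv nrb nva nvb] nhab] := facts.
rewrite /p1 /= -/r -/a -/v mem_rcons in_cons negb_or nrv nra rcons_uniq nva /=.
by have := uq; rewrite -/s sE cat_uniq => /andP[].
Qed.

Lemma up2 : uniq (p2 T).
Proof.
have [[nra nrv nrb nva nvb] nhab] := facts.
rewrite /p2 /= -/r -/b -/v mem_rcons in_cons negb_or nrv mem_rev nrb rcons_uniq mem_rev nvb rev_uniq /=.
by have := uq; rewrite -/s sE cat_uniq => /and3P[_ _] /= /andP[].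
Qed.

Let o (p : seq V) u := count (fun e => (e.1 == u) && (e.2 != u)) (edges p).
Let i (p : seq V) u := count (fun e => (e.2 == u) && (e.1 != u)) (edges p).

Lemma excl u : [|| (u == r) && (u \in a), (u == r) && (u == v), (u == r) && (u \in b),
   (u \in a) && (u == v), (u \in a) && (u \in b) | (u == v) && (u \in b)] = false.
Proof.
have [[nra nrv nrb nva nvb] nhab] := facts.
have h1 : (u == r) && (u \in a) = false.
  by apply/negbTE/andP => -[/eqP E]; rewrite E (negPf nra).
have h2 : (u == r) && (u == v) = false.
  by apply/negbTE/andP => -[/eqP E]; rewrite E (negPf nrv).
have h3 : (u == r) && (u \in b) = false.
  by apply/negbTE/andP => -[/eqP E]; rewrite E (negPf nrb).
have h4 : (u \in a) && (u == v) = false.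
  by apply/negbTE/andP => -[ua /eqP E]; move: nva; rewrite -E ua.
have h5 : (u \in a) && (u \in b) = false.
  by apply/negbTE/andP => -[ua ub]; move/hasP: nhab; apply; exists u.
have h6 : (u == v) && (u \in b) = false.
  by apply/negbTE/andP => -[/eqP E]; rewrite E (negPf nvb).
by rewrite h1 h2 h3 h4 h5 h6.
Qed.

Lemma out_sum u : (o (p1 T) u + o (p2 T) u = if u == r then 2 else if u == v then 0 else (u \in s))%N.
Proof.
have E := excl u.
have H1 := out_deg u up1; have H2 := out_deg u up2.
rewrite /p1 /p2 -/r -/a -/b -/v !last_rcons !in_cons !mem_rcons !in_cons mem_rev in H1 H2.
rewrite sE mem_cat in_cons.
have -> : ((u \in a) || ((u == v) || (u \in b))) = ((u \in a) || (u == v) || (u \in b)) by rewrite orbA.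
exact: arith_out E H1 H2.
Qed.

Lemma in_sum u : (i (p1 T) u + i (p2 T) u = if u == r then 0 else if u == v then 2 else (u \in s))%N.
Proof.
have E := excl u.
have H1 := in_deg u up1; have H2 := in_deg u up2.
rewrite /p1 /p2 -/r -/a -/b -/v !in_cons !mem_rcons !in_cons mem_rev in H1 H2.
rewrite sE mem_cat in_cons.
have -> : ((u \in a) || ((u == v) || (u \in b))) = ((u \in a) || (u == v) || (u \in b)) by rewrite orbA.
exact: arith_in E H1 H2.
Qed.

Lemma guardT : guard T r v.
Proof. by rewrite /guard !eqxx ne. Qed.

Lemma xout_T u : xout (xT T) r v u =
  if u == r then 2 else if u == v then 0 else (u \in s)%:R.
Proof.
rewrite /xout /xT guardT big_split /= !out_cnt -natrD.
have := out_sum u; rewrite /o => ->.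
by case: (u == r) => //; case: (u == v).
Qed.

Lemma xin_T u : xin (xT T) r v u =
  if u == r then 0 else if u == v then 2 else (u \in s)%:R.
Proof.
rewrite /xin /xT guardT big_split /= !in_cnt -natrD.
have := in_sum u; rewrite /i => ->.
by case: (u == r) => //; case: (u == v).
Qed.

Lemma cost_T : \sum_a0 \sum_(b0 | a0 != b0) c a0 b0 * xT T r v a0 b0 = tour_cost c T.
Proof.
rewrite /xT guardT.
under eq_bigr do under eq_bigr do rewrite mulrDr.
rewrite (eq_bigr (fun a0 => \sum_(b0 | a0 != b0) c a0 b0 * cntF F (edges (p1 T)) a0 b0 +
   \sum_(b0 | a0 != b0) c a0 b0 * cntF F (edges (p2 T)) a0 b0)); last by move=> a0 _; rewrite big_split.
rewrite big_split /= !cost_cnt.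
rewrite -[tour_cost c T]/(tour_cost c (r, s)) tour_pc sE rcons_cat.
rewrite -/(pc c (p1 T)) -/(pc c (p2 T)).
rewrite -cat_cons (pc_cat c0) -(pc_rev c0 csym (v :: rcons b r)).
rewrite rev_cons rev_rcons //.
all: exact: c0.
Qed.


Lemma cut_T u (S : {set V}) : u \in S -> r \notin S ->
  (u \in s)%:R <= xinS (xT T) r v S.
Proof.
move=> uS rS.
rewrite /xinS /xT guardT.
under eq_bigr do rewrite big_split.
rewrite big_split /= !cut_cnt -natrD ler_nat.
case us: (u \in s) => //.
move: us; rewrite sE mem_cat in_cons => /orP[ua|/orP[uv|ub]].
- have := cut_path (q := rcons a v) rS _ uS; rewrite in_cons mem_rcons in_cons ua !orbT => /(_ isT).
  by move=> H; apply: (leq_trans H); apply: leq_addr.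
- have := cut_path (q := rcons a v) rS _ uS; rewrite in_cons mem_rcons in_cons uv !orbT => /(_ isT).
  by move=> H; apply: (leq_trans H); apply: leq_addr.
- have := cut_path (q := rcons (rev b) v) rS _ uS; rewrite in_cons mem_rcons in_cons mem_rev ub !orbT => /(_ isT).
  by move=> H; apply: (leq_trans H); apply: leq_addl.
Qed.

End OneTour.

Lemma rns_good T : good T -> T.1 \notin T.2.
Proof.
case=> rD _ allC _; apply/negP => rin.
have := allP allC _ rin; rewrite /= => rC.
by rewrite (disjointFr dCD rC) in rD.
Qed.

Lemma sum_guard T (g : V -> V -> F) : T.1 \in D -> all (mem C) T.2 ->
  \sum_(r in D) \sum_(v in C) (if guard T r v then g r v else 0) =
  if T.2 != [::] then g T.1 (far T.1 T.2) else 0.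
Proof.
move=> rD allC.
case: ifP => ne; last first.
  by rewrite big1 // => r _; rewrite big1 // => v _; rewrite /guard ne !andbF.
rewrite (bigD1 T.1) //= [X in _ + X]big1 ?addr0; last first.
  by move=> r /andP[_ /negPf nr]; rewrite big1 // => v _; rewrite /guard nr.
have vC : far T.1 T.2 \in C by have := allP allC _ (far_in T.1 ne).
rewrite (bigD1 (far T.1 T.2)) //= [X in _ + X]big1 ?addr0; last first.
  by move=> v /andP[_ /negPf nv]; rewrite /guard nv andbF.
by rewrite /guard !eqxx ne.
Qed.

Section Good.
Variable T : tour V.
Hypothesis gT : good T.

Lemma g_uq : uniq T.2. Proof. by case: gT. Qed.
Lemma g_rD : T.1 \in D. Proof. by case: gT. Qed.
Lemma g_all : all (mem C) T.2. Proof. by case: gT. Qed.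
Lemma g_rns : T.1 \notin T.2. Proof. exact: rns_good. Qed.

Lemma G0x r v a0 b0 : 0 <= xT T r v a0 b0.
Proof. by rewrite /xT; case: ifP => // _; rewrite /cntF -natrD ler0n. Qed.

Lemma G0z r v u : 0 <= zT T r v u.
Proof. by rewrite /zT; case: ifP => // _; rewrite ler0n. Qed.

Lemma guard_inv r v : guard T r v -> [/\ r = T.1, v = far T.1 T.2 & T.2 != [::]].
Proof. by case/and3P => /eqP -> /eqP -> ne. Qed.

Lemma zvv (ne : T.2 != [::]) : zT T T.1 (far T.1 T.2) (far T.1 T.2) = 1.
Proof. by rewrite /zT /guard !eqxx ne /= far_in. Qed.

Lemma G1 r v u : xout (xT T) r v u =
  if u == r then 2 * zT T r v v else if u == v then 0 else zT T r v u.
Proof.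
case G: (guard T r v); last first.
  rewrite /xout /zT /xT G big1 // mulr0.
  by case: (u == r) => //; case: (u == v).
have [Er Ev ne] := guard_inv G; subst r v.
rewrite (xout_T ne g_uq g_rns) zvv // mulr1 /zT G.
by case: (u == T.1) => //; case: (u == far T.1 T.2).
Qed.

Lemma G2 r v u : xin (xT T) r v u =
  if u == r then 0 else if u == v then 2 * zT T r v v else zT T r v u.
Proof.
case G: (guard T r v); last first.
  rewrite /xin /zT /xT G big1 // mulr0.
  by case: (u == r) => //; case: (u == v).
have [Er Ev ne] := guard_inv G; subst r v.
rewrite (xin_T ne g_uq g_rns) zvv // mulr1 /zT G.
by case: (u == T.1) => //; case: (u == far T.1 T.2).
Qed.

Lemma G3 r v u (S : {set V}) : u \in S -> S \subset ~: [set r] ->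
  zT T r v u <= xinS (xT T) r v S.
Proof.
move=> uS sub.
case G: (guard T r v); last first.
  rewrite /zT G; apply: sumr_ge0 => a0 _; apply: sumr_ge0 => b0 _; exact: G0x.
have [Er Ev ne] := guard_inv G; subst r v.
rewrite /zT G; apply: (cut_T ne uS).
apply/negP => rS; have := subsetP sub _ rS.
by rewrite in_setC in_set1 eqxx.
Qed.

Lemma G5 r v u : zT T r v u <= zT T r v v.
Proof.
rewrite /zT; case G: (guard T r v) => //.
have [Er Ev ne] := guard_inv G; subst r v.
by rewrite far_in // ler_nat leq_b1.
Qed.

Lemma G6 r v u : c u r > c v r -> zT T r v u = 0.
Proof.
rewrite /zT; case G: (guard T r v) => // lt.
have [Er Ev ne] := guard_inv G; subst r v.
case us: (u \in T.2) => //.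
by have := far_max T.1 us; rewrite leNgt lt.
Qed.

Lemma G7 r v : \sum_(u in C) zT T r v u <= k%:R * zT T r v v.
Proof.
rewrite /zT; case G: (guard T r v); last by rewrite big1 ?mulr0.
have [Er Ev ne] := guard_inv G; subst r v.
rewrite far_in // mulr1 -natr_sum ler_nat.
apply: leq_trans (_ : (size T.2 <= k)%N); last by case: gT.
apply: (@leq_trans (\sum_u (u \in T.2 : nat))).
  by rewrite [X in (X <= _)%N]big_mkcond; apply: leq_sum => u _; case: (u \in C).
have -> : (\sum_u (u \in T.2 : nat) = \sum_(u in T.2) 1)%N.
  by rewrite [RHS]big_mkcond; apply: eq_bigr => u _; case: (u \in T.2).
by rewrite sum1_card (card_uniqP g_uq).
Qed.

Lemma G4 u : \sum_(r in D) \sum_(v in C) zT T r v u = (u \in T.2)%:R.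
Proof.
rewrite /zT (sum_guard (fun _ _ => (u \in T.2)%:R) g_rD g_all).
by case: ifP => // /negbFE /eqP ->.
Qed.

Lemma Gc : \sum_(r in D) \sum_(v in C) \sum_a0 \sum_(b0 | a0 != b0) c a0 b0 * xT T r v a0 b0
   = tour_cost c T.
Proof.
have E : forall r v, \sum_a0 \sum_(b0 | a0 != b0) c a0 b0 * xT T r v a0 b0 =
   if guard T r v then tour_cost c T else 0.
  move=> r v; case G: (guard T r v); last first.
    by rewrite big1 // => a0 _; rewrite big1 // => b0 _; rewrite /xT G mulr0.
  have [Er Ev ne] := guard_inv G; subst r v.
  exact: (cost_T ne).
under eq_bigr do under eq_bigr do rewrite E.
rewrite (sum_guard (fun _ _ => tour_cost c T) g_rD g_all).
case: ifP => // /negbFE /eqP E2.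
rewrite -[tour_cost c T]/(tour_cost c (T.1, T.2)) E2 tour_pc /pc /= big_cons big_nil c0 addr0 //.
Qed.

End Good.
End Tour.

Section Global.
Variables (F : realFieldType) (V : finType) (c : V -> V -> F).
Variables (C D : {set V}) (k : nat).
Hypothesis c0 : forall a, c a a = 0.
Hypothesis csym : forall a b, c a b = c b a.
Hypothesis ctri : forall a b w, c a w <= c a b + c b w.
Hypothesis cnn : forall a b, 0 <= c a b.
Hypothesis dCD : [disjoint C & D].

Fixpoint clean (sol : seq (tour V)) (seen : seq V) : seq (tour V) :=
  if sol is t :: ts then
    (t.1, undup [seq w <- t.2 | (w \in C) && (w \notin seen)]) ::
      clean ts (seen ++ undup [seq w <- t.2 | (w \in C) && (w \notin seen)])
  else [::].

Lemma clean_good sol seen :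
  (forall t, t \in sol -> t.1 \in D /\ (#|tour_clients C t| <= k)%N) ->
  forall T, T \in clean sol seen -> good C D k T.
Proof.
elim: sol seen => [|t ts IH] seen Hsol T //=.
rewrite in_cons => /orP[/eqP ->|]; last first.
  by apply: IH => t' t'in; apply: Hsol; rewrite in_cons t'in orbT.
have [tD tk] := Hsol t (mem_head _ _).
split => //=.
- exact: undup_uniq.
- by apply/allP => w; rewrite mem_undup mem_filter => /andP[/andP[]].
- rewrite -(card_uniqP (undup_uniq _)); apply: leq_trans tk.
  apply: subset_leq_card; apply/subsetP => w.
  by rewrite mem_undup mem_filter /tour_clients inE => /andP[/andP[-> _] ->].
Qed.

Lemma clean_cover sol seen u : u \in C ->
  \sum_(T <- clean sol seen) (u \in T.2)%:R =
  ((u \notin seen) && has (fun t : tour V => u \in t.2) sol)%:R :> F.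
Proof.
move=> uC; elim: sol seen => [|t ts IH] seen /=; first by rewrite big_nil andbF.
rewrite big_cons IH /= mem_cat !mem_undup !mem_filter uC /=.
case: (u \in seen); case: (u \in t.2); case: (has _ ts); by rewrite /= ?add0r ?addr0.
Qed.

Lemma clean_cost sol seen :
  \sum_(T <- clean sol seen) tour_cost c T <= sol_cost c sol.
Proof.
elim: sol seen => [|t ts IH] seen /=; first by rewrite big_nil /sol_cost big_nil.
rewrite big_cons /sol_cost big_cons; apply: lerD; last exact: IH.
rewrite -[tour_cost c t]/(tour_cost c (t.1, t.2)) !tour_pc.
apply: pc_subseq => //.
exact: subseq_trans (undup_subseq _) (filter_subseq _ _).
Qed.

Lemma part1 sol : cvrp_feasible C D k sol ->
  exists x z, lp_feasible c C D k x z /\ lp_cost c C D x <= sol_cost c sol.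
Proof.
case=> Hsol Hcov.
set L := clean sol [::].
have gL : forall T, T \in L -> good C D k T by apply: clean_good.
pose xs : lpx F V := fun r v a b => \sum_(T <- L) xT c T r v a b.
pose zs : lpz F V := fun r v u => \sum_(T <- L) zT c T r v u.
exists xs, zs; split; last first.
  rewrite /lp_cost.
  have -> : \sum_(r in D) \sum_(v in C) \sum_a \sum_(b | a != b) c a b * xs r v a b =
     \sum_(T <- L) \sum_(r in D) \sum_(v in C) \sum_a \sum_(b | a != b) c a b * xT c T r v a b.
    symmetry.
    rewrite exchange_big; apply: eq_bigr => r _.
    rewrite exchange_big; apply: eq_bigr => v _.
    rewrite exchange_big; apply: eq_bigr => a _.
    rewrite exchange_big; apply: eq_bigr => b _.
    by rewrite mulr_sumr.
  rewrite (eq_big_seq (fun T => tour_cost c T)); first exact: clean_cost.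
  by move=> T TL; exact: (Gc c0 csym cnn (gL T TL)).
split; [|split; [|split; [|split; [|split; [|split; [|split; [|split]]]]]]].
- by move=> r v a b _ _ _; apply: sumr_ge0 => T _; apply: G0x.
- by move=> r v u _ _; apply: sumr_ge0 => T _; apply: G0z.
- move=> r v u _ _.
  rewrite /xout /xs exchange_big /=.
  rewrite (eq_big_seq (fun T => if u == r then 2 * zT c T r v v else if u == v then 0 else zT c T r v u)); last first.
    by move=> T TL; exact: (G1 c0 cnn dCD (gL T TL)).
  rewrite /zs; case: (u == r); first by rewrite mulr_sumr.
  by case: (u == v) => //; rewrite big1.
- move=> r v u _ _.
  rewrite /xin /xs exchange_big /=.
  rewrite (eq_big_seq (fun T => if u == r then 0 else if u == v then 2 * zT c T r v v else zT c T r v u)); last first.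
    by move=> T TL; exact: (G2 c0 cnn dCD (gL T TL)).
  rewrite /zs; case: (u == r); first by rewrite big1.
  by case: (u == v) => //; rewrite mulr_sumr.
- move=> r v u S _ _ uS sub.
  have -> : xinS xs r v S = \sum_(T <- L) xinS (xT c T) r v S.
    rewrite /xinS /xs; symmetry; rewrite exchange_big; apply: eq_bigr => a _.
    by rewrite exchange_big.
  by apply: ler_sum => T _; exact: (G3 c0 cnn).
- move=> u uC.
  rewrite /zs.
  have -> : \sum_(r in D) \sum_(v in C) \sum_(T <- L) zT c T r v u =
     \sum_(T <- L) \sum_(r in D) \sum_(v in C) zT c T r v u.
    by symmetry; rewrite exchange_big; apply: eq_bigr => r _; rewrite exchange_big.
  rewrite (eq_big_seq (fun T : tour V => (u \in T.2)%:R)); last first.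
    by move=> T TL; exact: (G4 c0 cnn (gL T TL)).
  rewrite clean_cover //=.
  have [t tin ut] := Hcov u uC.
  by rewrite (_ : has _ _ = true) //; apply/hasP; exists t.
- by move=> r u v _ _ _; apply: ler_sum => T _; exact: (G5 c0 cnn).
- by move=> r u v _ _ _ lt; apply: big1 => T _; apply: G6.
- move=> r v _ _.
  rewrite /zs exchange_big /= mulr_sumr.
  rewrite big_seq_cond [X in _ <= X]big_seq_cond.
  by apply: ler_sum => T /andP[TL _]; exact: (G7 c0 cnn (gL T TL)).
Qed.

Lemma part2 (z : lpz F V) : (1 <= k)%N ->
  (forall r v u, r \in D -> v \in C -> 0 <= z r v u) ->
  (forall u, u \in C -> \sum_(r in D) \sum_(v in C) z r v u = 1) ->
  (forall r u v, r \in D -> u \in C -> v \in C -> c u r > c v r -> z r v u = 0) ->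
  (forall r v, r \in D -> v \in C -> \sum_(u in C) z r v u <= k%:R * z r v v) ->
  2 / k%:R * \sum_(v in C) distS c D v <= \sum_(r in D) \sum_(v in C) 2 * c v r * z r v v.
Proof.
move=> k1 H0 H4 H6 H7.
have dle : forall u r, r \in D -> distS c D u <= c u r.
  move=> u r rD; rewrite /distS; case: pickP => [r0 _|H]; first exact: bigmin_le_cond.
  by rewrite H in rD.
have step1 : \sum_(u in C) distS c D u =
    \sum_(r in D) \sum_(v in C) \sum_(u in C) z r v u * distS c D u.
  transitivity (\sum_(u in C) \sum_(r in D) \sum_(v in C) z r v u * distS c D u).
    apply: eq_bigr => u uC.
    rewrite -[LHS]mul1r -(H4 u uC) mulr_suml; apply: eq_bigr => r _.
    by rewrite mulr_suml.
  by rewrite exchange_big; apply: eq_bigr => r _; rewrite exchange_big.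
have step2 : forall r v, r \in D -> v \in C ->
    \sum_(u in C) z r v u * distS c D u <= k%:R * z r v v * c v r.
  move=> r v rD vC.
  apply: (@le_trans _ _ (\sum_(u in C) z r v u * c v r)).
    apply: ler_sum => u uC.
    case: (ltP (c v r) (c u r)) => [lt|le]; first by rewrite H6 // !mul0r.
    by apply: ler_wpM2l; [exact: H0 | exact: le_trans (dle u r rD) le].
  by rewrite -mulr_suml; apply: ler_wpM2r; [exact: cnn | exact: H7].
have kn0 : k%:R != 0 :> F by rewrite pnatr_eq0 -lt0n.
rewrite step1 mulr_sumr; apply: ler_sum => r rD; rewrite mulr_sumr; apply: ler_sum => v vC.
have E : 2 / k%:R * (k%:R * z r v v * c v r) = 2 * c v r * z r v v.
  by field.
rewrite -E; apply: ler_wpM2l; last exact: step2.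
by rewrite divr_ge0 // ler0n.
Qed.

End Global.

Unset Implicit Arguments.

Theorem lemma2 (F : realFieldType) (V : finType) (C D : {set V})
    (c : V -> V -> F) (k : nat) (x : lpx F V) (z : lpz F V) (delta : F) :
  C != set0 -> D != set0 -> [disjoint C & D] -> C :|: D = setT ->
  is_metric c -> (1 <= k)%N ->
  (forall v, v \in C -> 0 < distS c D v) ->
  lp_optimal c C D k x z ->
  \sum_(r in D) \sum_(v in C) 2 * c v r * z r v v
    = (1 - delta) * lp_cost c C D x ->
  (forall sol : seq (tour V), cvrp_feasible C D k sol ->
     lp_cost c C D x <= sol_cost c sol) /\
  2 / k%:R * \sum_(v in C) distS c D v <= (1 - delta) * lp_cost c C D x.
Proof.
move=> _ _ dCD _ [cnn ceq csym ctri] k1 _ [feas opt] Hdelta.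
have c0 : forall a, c a a = 0 by move=> a; apply/(proj2 (ceq a a)).
split.
  move=> sol fs.
  have [x' [z' [f' le']]] := part1 c0 csym ctri cnn dCD fs.
  exact: le_trans (opt x' z' f') le'.
rewrite -Hdelta.
case: feas => H0x [H0z [_ [_ [_ [H4 [_ [H6 H7]]]]]]].
exact: part2.
Qed.
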